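(* Let $A$ and $B$ be rings, $f: A\to B$ a ring homomorphism and $J$ a proper ideal of $B$ such that $f^{-1}(J)\subseteq\mathrm{nil}(A)$. If $f(A)+J$ is a weak Armendariz ring, then $A\bowtie^{f}J$ is a weak Armendariz ring.
   Context: All rings are associative with identity (not necessarily commutative), ring homomorphisms are unital, and ideals are two-sided. $\mathrm{nil}(R)$ denotes the set of nilpotent elements of a ring $R$. For a ring homomorphism $f:A\to B$ and an ideal $J$ of $B$, the amalgamation is the subring $A\bowtie^{f}J=\{(a,f(a)+j)\mid a\in A,\ j\in J\}$ of $A\times B$; $f(A)+J=\{f(a)+j: a\in A, j\in J\}$ is a subring of $B$. A ring $R$ is weak Armendariz if whenever $p(x)=\sum_{i=0}^n a_ix^i$ and $q(x)=\sum_{j=0}^m b_jx^j$ in $R[x]$ satisfy $p(x)q(x)=0$, then $a_ib_j\in\mathrm{nil}(R)$ for all $i,j$. *)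

(* Defs.v *)
From HB Require Import structures.
From mathcomp Require Import all_boot all_order all_algebra.
Set Implicit Arguments. Unset Strict Implicit. Unset Printing Implicit Defensive.
Import GRing.Theory.
Local Open Scope ring_scope.

Definition is_nilpotent (R : nzRingType) (x : R) : Prop := exists n : nat, x ^+ n = 0.

Definition proper_two_sided_ideal (B : nzRingType) (J : B -> Prop) : Prop :=
  [/\ J 0,
      (forall x y, J x -> J y -> J (x - y)),
      (forall a x, J x -> J (a * x) /\ J (x * a))
    & ~ J 1].

(* Since S is a subring of R,
   polynomial multiplication and nilpotency in S agree with those in R. *)
Definition weak_armendariz_on (R : nzRingType) (S : R -> Prop) : Prop :=
  forall p q : {poly R},
    (forall i, S p`_i) -> (forall i, S q`_i) -> p * q = 0 ->
    forall i j, is_nilpotent (p`_i * q`_j).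

Definition fA_plus_J (A B : nzRingType) (f : {rmorphism A -> B}) (J : B -> Prop)
  : B -> Prop := fun b => exists a j, J j /\ b = f a + j.

Definition amalgamation (A B : nzRingType) (f : {rmorphism A -> B}) (J : B -> Prop)
  : (A * B)%type -> Prop := fun x => exists a j, J j /\ x = (a, f a + j).

(* Main.v *)
Require Import Defs.
From HB Require Import structures.
From mathcomp Require Import all_boot all_order all_algebra.
Import GRing.Theory.
Local Open Scope ring_scope.

Lemma nil_pair (A B : nzRingType) (x : A) (y : B) :
  is_nilpotent x -> is_nilpotent y -> is_nilpotent ((x, y) : A * B).
Proof.
move=> [n Hn] [m Hm]; exists (n + m)%N.
have E : forall k, ((x, y) : A * B) ^+ k = (x ^+ k, y ^+ k).
  elim=> [|k IH]; first by [].
  by rewrite !exprS IH.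
by rewrite E exprD Hn mul0r exprD Hm mulr0.
Qed.

Theorem theorem4p1 (A B : nzRingType) (f : {rmorphism A -> B}) (J : B -> Prop)
  (hJ : proper_two_sided_ideal J)
  (hpre : forall a : A, J (f a) -> is_nilpotent a)
  (hwa : weak_armendariz_on (fA_plus_J f J)) :
  weak_armendariz_on (amalgamation f J).
Proof.
case: hJ => J0 _ _ _.
move=> p q Hp Hq Hpq i j.
pose p1 := map_poly (fst : A * B -> A) p.
pose q1 := map_poly (fst : A * B -> A) q.
pose p2 := map_poly (snd : A * B -> B) p.
pose q2 := map_poly (snd : A * B -> B) q.
have H1 : p1 * q1 = 0 by rewrite /p1 /q1 -rmorphM Hpq rmorph0.
have H2 : p2 * q2 = 0 by rewrite /p2 /q2 -rmorphM Hpq rmorph0.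
have Hp2 : forall k, fA_plus_J f J p2`_k.
  move=> k; rewrite coef_map /=; case: (Hp k) => a [b [Jb ->]].
  by exists a, b.
have Hq2 : forall k, fA_plus_J f J q2`_k.
  move=> k; rewrite coef_map /=; case: (Hq k) => a [b [Jb ->]].
  by exists a, b.
have H3 : map_poly f p1 * map_poly f q1 = 0 by rewrite -rmorphM H1 rmorph0.
have Hf : forall r : {poly A}, forall k, fA_plus_J f J (map_poly f r)`_k.
  by move=> r k; rewrite coef_map; exists r`_k, 0; split; rewrite ?addr0.
have [n Hn] := hwa _ _ (Hf p1) (Hf q1) H3 i j.
have N1 : is_nilpotent ((p`_i).1 * (q`_j).1).
  rewrite !coef_map /= -rmorphM -rmorphXn in Hn.
  have [m Hm] := hpre _ (eq_ind_r J J0 Hn).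
  by exists (n * m)%N; rewrite exprM.
have [m Hm] := hwa _ _ Hp2 Hq2 H2 i j.
have N2 : is_nilpotent ((p`_i).2 * (q`_j).2).
  by exists m; rewrite !coef_map /= in Hm.
by case: (p`_i) N1 N2 => x1 x2; case: (q`_j) => y1 y2 /= N1 N2; apply: nil_pair.
Qed.
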